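(* Let $k$ be a positive integer and let $G$ and $H$ be graphs with maximum degree $2$ such that $\mathcal{D}_k(G)=\mathcal{D}_k(H)$. Then $G$ and $H$ have the same number of components that are paths with at least $k-1$ vertices. (That is, for graphs of maximum degree $2$, this number is determined by the $k$-deck.)
   Context: The $k$-deck $\mathcal{D}_k(G)$ is the multiset of isomorphism classes of the induced subgraphs of $G$ on $k$ vertices. *)

(* Defs.v *)
From mathcomp Require Import all_boot.
Set Implicit Arguments. Unset Strict Implicit. Unset Printing Implicit Defensive.

Definition simple_graph (V : finType) (e : rel V) : Prop :=
  symmetric e /\ irreflexive e.

Definition max_deg_le (V : finType) (e : rel V) (d : nat) : Prop :=
  forall v : V, #|[set w | e v w]| <= d.

(* Number of k-vertex subsets S of V such that the induced subgraph e[S]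
   is isomorphic to the graph F on 'I_k (i.e. the multiplicity of the
   isomorphism class of F in the k-deck). *)
Definition deck_count (V : finType) (e : rel V) (k : nat) (F : rel 'I_k) : nat :=
  #|[set S : {set V} | (#|S| == k) &&
     [exists f : {ffun 'I_k -> V},
        [&& injectiveb f, (f @: setT == S) &
            [forall i, forall j, F i j == e (f i) (f j)]]]]|.

(* Equality of k-decks: every isomorphism class of k-vertex graphs
   (represented on 'I_k) occurs with the same multiplicity. *)
Definition same_deck (k : nat) (V1 V2 : finType) (e1 : rel V1) (e2 : rel V2) : Prop :=
  forall F : rel 'I_k, simple_graph F -> deck_count e1 F = deck_count e2 F.

Definition is_component (V : finType) (e : rel V) (C : {set V}) : bool :=
  [exists v, C == [set w | connect e v w]].

Definition induces_path (V : finType) (e : rel V) (C : {set V}) : bool :=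
  [exists f : {ffun 'I_#|C| -> V},
     [&& injectiveb f, (f @: setT == C) &
         [forall i, forall j,
            e (f i) (f j) == ((i.+1 == j :> nat) || (j.+1 == i :> nat))]]].

Definition num_path_comps_ge (V : finType) (e : rel V) (m : nat) : nat :=
  #|[set C : {set V} | [&& is_component e C, induces_path e C & m <= #|C|]]|.

(* Main.v *)
Require Import Defs.
From mathcomp Require Import all_boot zify.
Set Implicit Arguments. Unset Strict Implicit. Unset Printing Implicit Defensive.

Section Counting.
Variables (V : finType) (e : rel V).

Definition pb k (t : k.-tuple V) : {ffun 'I_k -> {ffun 'I_k -> bool}} :=
  [ffun i => [ffun j => e (tnth t i) (tnth t j)]].

Definition Cnt k (P : pred {ffun 'I_k -> {ffun 'I_k -> bool}}) :=
  #|[set t : k.-tuple V | uniq t && P (pb t)]|.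

Definition Emb k (F : {ffun 'I_k -> {ffun 'I_k -> bool}}) :=
  #|[set t : k.-tuple V | uniq t && (pb t == F)]|.

Definition aut k (F : {ffun 'I_k -> {ffun 'I_k -> bool}}) :=
  #|[set s : {ffun 'I_k -> 'I_k} | injectiveb s &&
      [forall i, forall j, F i j == F (s i) (s j)]]|.

Lemma Cnt_sum k P : @Cnt k P = \sum_(F | P F) Emb F.
Proof.
rewrite /Cnt -sum1dep_card (partition_big (@pb k) P) /=; last first.
  by move=> t /andP[].
apply: eq_bigr => F PF; rewrite /Emb -sum1dep_card; apply: eq_bigl => t.
by case: eqP => [->|]; rewrite ?PF ?andbT ?andbF.
Qed.

Definition deckset k (F : rel 'I_k) :=
  [set S : {set V} | (#|S| == k) &&
     [exists f : {ffun 'I_k -> V},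
        [&& injectiveb f, (f @: setT == S) &
            [forall i, forall j, F i j == e (f i) (f j)]]]].

Lemma fiber_aut k (F : {ffun 'I_k -> {ffun 'I_k -> bool}}) S :
  S \in deckset (fun i j => F i j) ->
  #|[set t : k.-tuple V | (uniq t && (pb t == F)) && ([set x in t] == S)]| = aut F.
Proof.
rewrite inE => /andP[_ /existsP[f0 /and3P[/injectiveP f0inj /eqP f0S /forallP f0F]]].
pose Phi (s : {ffun 'I_k -> 'I_k}) := [tuple f0 (s i) | i < k].
have Phi_inj : injective Phi.
  move=> s s' eqs; apply/ffunP => i; apply: f0inj.
  by have := congr1 (fun t => tnth t i) eqs; rewrite /Phi !tnth_mktuple.
rewrite /aut -(card_imset _ Phi_inj); apply: eq_card => t.
apply/idP/imsetP; last first.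
  move=> [s]; rewrite inE => /andP[/injectiveP sinj /forallP sF] ->.
  rewrite inE -andbA; apply/and3P; split.
  - apply/tuple_uniqP => i j; rewrite !tnth_mktuple => /f0inj; exact: sinj.
  - apply/eqP/ffunP => i; apply/ffunP => j; rewrite !ffunE !tnth_mktuple.
    have := f0F (s i) => /forallP /(_ (s j)) /eqP <-.
    by have := sF i => /forallP /(_ j) /eqP <-.
  - apply/eqP/setP => x; rewrite inE -f0S; apply/tnthP/imsetP.
      by move=> [i ->]; rewrite tnth_mktuple; exists (s i).
    move=> [j _ ->]; have [g sg gs] := injF_bij sinj.
    by exists (g j); rewrite tnth_mktuple gs.
rewrite inE => /andP[/andP[/tuple_uniqP tinj /eqP tF] /eqP tS].
have hx i : exists j, f0 j == tnth t i.
  have : tnth t i \in S by rewrite -tS inE mem_tnth.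
  by rewrite -f0S => /imsetP[j _ ->]; exists j.
pose s := [ffun i => odflt i [pick j | f0 j == tnth t i]].
have f0s i : f0 (s i) = tnth t i.
  rewrite /s ffunE; case: pickP => [j /eqP //|].
  by move=> H; have [j] := hx i; rewrite H.
exists s; last first.
  by apply: eq_from_tnth => i; rewrite tnth_mktuple f0s.
rewrite inE; apply/andP; split.
  by apply/injectiveP => i j eqij; apply: tinj; rewrite -!f0s eqij.
apply/forallP => i; apply/forallP => j.
have := f0F (s i) => /forallP /(_ (s j)) /eqP ->.
by rewrite !f0s -tF !ffunE.
Qed.

Lemma Emb_deck k (F : {ffun 'I_k -> {ffun 'I_k -> bool}}) :
  Emb F = deck_count e (fun i j => F i j) * aut F.
Proof.
rewrite /Emb -sum1dep_card.
rewrite (partition_big (fun t : k.-tuple V => [set x in t]) (mem (deckset (fun i j => F i j)))) /=; last first.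
  move=> t /andP[tu /eqP tF]; rewrite inE; apply/andP; split.
    by rewrite cardsE; move/card_uniqP: tu => ->; rewrite size_tuple.
  apply/existsP; exists [ffun i => tnth t i]; apply/and3P; split.
  - by apply/injectiveP => i j; rewrite !ffunE => /(tuple_uniqP _ tu).
  - apply/eqP/setP => x; rewrite inE; apply/imsetP/tnthP.
      by move=> [i _ ->]; exists i; rewrite ffunE.
    by move=> [i ->]; exists i; rewrite ?ffunE.
  - by apply/forallP => i; apply/forallP => j; rewrite -tF !ffunE.
rewrite /deck_count -/(deckset _) -sum_nat_const; apply: eq_bigr => S SD.
by rewrite sum1dep_card fiber_aut.
Qed.

Lemma Emb_simple k (F : {ffun 'I_k -> {ffun 'I_k -> bool}}) :
  simple_graph e -> 0 < Emb F -> simple_graph (fun i j => F i j).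
Proof.
move=> [esym eirr]; rewrite /Emb card_gt0 => /set0Pn [t]; rewrite inE.
move=> /andP[_ /eqP <-]; split.
  by move=> i j; rewrite !ffunE esym.
by move=> i; rewrite !ffunE eirr.
Qed.

End Counting.

Lemma Cnt_eq k (V1 V2 : finType) (e1 : rel V1) (e2 : rel V2) P :
  simple_graph e1 -> simple_graph e2 -> same_deck k e1 e2 ->
  @Cnt _ e1 k P = @Cnt _ e2 k P.
Proof.
move=> s1 s2 sd; rewrite !Cnt_sum; apply: eq_bigr => F _.
have H : simple_graph (fun i j => F i j) -> Emb e1 F = Emb e2 F.
  by move=> sF; rewrite !Emb_deck sd.
case: (posnP (Emb e1 F)) => [E1|E1]; last exact/H/(Emb_simple s1).
case: (posnP (Emb e2 F)) => [E2|E2]; first by rewrite E1 E2.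
exact/H/(Emb_simple s2).
Qed.


Section Struct.
Variables (V : finType) (e : rel V).
Hypotheses (esym : symmetric e) (eirr : irreflexive e)
  (edeg : forall v, #|[set w | e v w]| <= 2).

Definition deg x := #|[set w | e x w]|.

Lemma deg2 x a b c : e x a -> e x b -> e x c -> a != b -> (c == a) || (c == b).
Proof.
move=> xa xb xc ab; apply/negPn/negP; rewrite negb_or => /andP[ca cb].
have : #|c |: [set a; b]| <= 2.
  apply: leq_trans (edeg x); apply: subset_leq_card; apply/subsetP => y.
  by rewrite !inE => /orP[|/orP[]] /eqP ->.
by rewrite cardsU1 cards2 ab !inE negb_or ca cb.
Qed.

Lemma deg_ge2 x a b : e x a -> e x b -> a != b -> 1 < deg x.
Proof.
move=> xa xb ab; rewrite /deg.
have <- : #|[set a; b]| = 2 by rewrite cards2 ab.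
apply: subset_leq_card; apply/subsetP => y.
by rewrite !inE => /orP[] /eqP ->.
Qed.

Lemma deg1 x a b : deg x <= 1 -> e x a -> e x b -> a = b.
Proof.
move=> dx xa xb; apply/eqP/negPn/negP => ab.
by have := deg_ge2 xa xb ab; rewrite ltnNge dx.
Qed.

Variable d : V.

Definition lpath (s : seq V) := uniq s /\
  forall i j, i < size s -> j < size s ->
    e (nth d s i) (nth d s j) = (i.+1 == j) || (j.+1 == i).

Definition cl (s : seq V) x := [forall w, e x w ==> (w \in s)].

Lemma clP s x : reflect (forall w, e x w -> w \in s) (cl s x).
Proof.
apply: (iffP forallP) => H w; first by move=> xw; have /implyP := H w; apply.
by apply/implyP; apply: H.
Qed.

Lemma lpath_interior s i w : lpath s -> 0 < i -> i.+1 < size s ->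
  e (nth d s i) w -> w \in s.
Proof.
move=> [us ads] i0 isz xw.
have ilt : i < size s by apply: ltnW.
have a1 : e (nth d s i) (nth d s i.-1).
  by rewrite ads ?(leq_ltn_trans (leq_pred i)) // prednK ?eqxx ?orbT.
have a2 : e (nth d s i) (nth d s i.+1) by rewrite ads // eqxx.
have neq : nth d s i.-1 != nth d s i.+1.
  rewrite nth_uniq ?(leq_ltn_trans (leq_pred i)) //.
  by apply/negP => /eqP h; move: (leq_pred i); rewrite h ltnn.
by case/orP: (deg2 a1 a2 xw neq) => /eqP ->; rewrite mem_nth ?(leq_ltn_trans (leq_pred i)).
Qed.

Lemma lpath_rcons s u : lpath s -> s != [::] -> cl s (head d s) ->
  e (last d s) u -> u \notin s -> lpath (rcons s u).
Proof.
move=> ps sn /clP hc lu us; have [uq ads] := ps.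
have n0 : 0 < size s by case: s sn {ps hc lu us uq ads}.
have key i : i < size s -> i.+1 != size s -> ~~ e (nth d s i) u.
  move=> isz ni; apply/negP => iu.
  case: i isz ni iu => [|i] isz ni iu.
    by move: iu; rewrite nth0 => /hc; rewrite (negbTE us).
  have : u \in s.
    apply: (@lpath_interior s i.+1) => //.
    by rewrite ltn_neqAle ni isz.
  by rewrite (negbTE us).
split; first by rewrite rcons_uniq us uq.
move=> i j; rewrite size_rcons !ltnS !nth_rcons => Hi Hj.
have [ilt|ige] := ltnP i (size s); have [jlt|jge] := ltnP j (size s).
- by rewrite ads.
- have -> : j = size s by apply/eqP; rewrite eqn_leq Hj jge.
  rewrite eqxx.
  case: (eqVneq i.+1 (size s)) => [hi|hi].
    by rewrite -hi /= -nth_last -hi /= in lu *.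
  by rewrite (negbTE (key _ ilt hi)) /= eqn_leq (leqNgt (size s).+1) ltnW // andbF.
- have -> : i = size s by apply/eqP; rewrite eqn_leq Hi ige.
  rewrite eqxx esym.
  case: (eqVneq j.+1 (size s)) => [hj|hj].
    by rewrite -hj /= -nth_last -hj /= orbT in lu *.
  by rewrite (negbTE (key _ jlt hj)) /= eqn_leq (leqNgt (size s).+1) ltnW //.
- have -> : i = size s by apply/eqP; rewrite eqn_leq Hi ige.
  have -> : j = size s by apply/eqP; rewrite eqn_leq Hj jge.
  by rewrite eqxx eirr eqn_leq ltnn /=.
Qed.

Lemma lpath_nth0 s : s != [::] -> head d s \in s.
Proof. by case: s => //= x s _; rewrite mem_head. Qed.

Lemma lpath_closed s x y : lpath s -> s != [::] -> cl s (head d s) ->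
  cl s (last d s) -> x \in s -> e x y -> y \in s.
Proof.
move=> ps sn /clP hc /clP lc xs xy.
have ix : index x s < size s by rewrite index_mem.
have ex : nth d s (index x s) = x by rewrite nth_index.
case: (posnP (index x s)) => [i0|ip].
  by apply: hc; rewrite -nth0 -i0 ex.
case: (eqVneq (index x s).+1 (size s)) => [il|il].
  by apply: lc; rewrite -nth_last -il /= ex.
apply: (@lpath_interior s (index x s)) => //; last by rewrite ex.
by rewrite ltn_neqAle il ix.
Qed.

Lemma lpath_conn s x : lpath s -> x \in s -> connect e (head d s) x.
Proof.
move=> [us ads] xs.
suff H i : i < size s -> connect e (nth d s 0) (nth d s i).
  by rewrite -nth0 -(nth_index d xs); apply: H; rewrite index_mem.
elim: i => [|i IH] isz; first exact: connect0.
apply: connect_trans (IH (ltnW isz)) (connect1 _).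
by rewrite ads ?eqxx // ltnW.
Qed.

Lemma walk s : lpath s -> s != [::] -> cl s (head d s) ->
  exists t, [/\ lpath t, t != [::], head d t = head d s,
     cl t (head d t) & cl t (last d t)].
Proof.
move=> ps; have [n] := ubnP (#|V| - size s); elim: n s ps => // n IH s ps lt sn hc.
case cll: (cl s (last d s)); first by exists s.
move/negbT: cll => /forallPn [u]; rewrite negb_imply => /andP[lu us].
have ps' := lpath_rcons ps sn hc lu us.
have hd' : head d (rcons s u) = head d s by case: (s) sn.
have szr : size (rcons s u) <= #|V|.
  by have [ur _] := ps'; rewrite -(elimT card_uniqP ur) max_card.
have lt' : #|V| - size (rcons s u) < n.
  by move: szr lt; rewrite size_rcons; lia.
have sn' : rcons s u != [::] by case: (s).
have hc' : cl (rcons s u) (head d (rcons s u)).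
  apply/clP => w; rewrite hd' => /(clP _ _ hc) ws.
  by rewrite mem_rcons in_cons ws orbT.
have [t [pt tn ht c1 c2]] := IH _ ps' lt' sn' hc'.
by exists t; split => //; rewrite ht hd'.
Qed.

Lemma comp_lpath t : lpath t -> t != [::] -> cl t (head d t) -> cl t (last d t) ->
  [set w | connect e (head d t) w] = [set x in t].
Proof.
move=> pt tn c1 c2; apply/setP => w; rewrite !inE; apply/idP/idP.
  have clo : closed e (mem t).
    move=> x y xy; apply/idP/idP => H.
      exact: (lpath_closed pt tn c1 c2 H xy).
    by apply: (lpath_closed pt tn c1 c2 H); rewrite esym.
  by move=> /(closed_connect clo) <-; apply: lpath_nth0.
exact: lpath_conn.
Qed.

Lemma ip_lpath t : lpath t -> induces_path e [set x in t].
Proof.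
move=> [ut adt].
have ct : #|[set x in t]| = size t by rewrite cardsE; apply/card_uniqP.
apply/existsP; exists [ffun i : 'I_#|[set x in t]| => nth d t i].
have lt (i : 'I_#|[set x in t]|) : i < size t by rewrite -ct.
apply/and3P; split.
- apply/injectiveP => i j; rewrite !ffunE => /eqP; rewrite nth_uniq ?lt //.
  by move/eqP; apply: val_inj.
- apply/eqP/setP => x; rewrite inE; apply/imsetP/idP.
    by move=> [i _ ->]; rewrite ffunE mem_nth ?lt.
  move=> xt; have hi : index x t < #|[set x in t]| by rewrite ct index_mem.
  by exists (Ordinal hi); rewrite ?inE // ffunE /= nth_index.
- by apply/forallP => i; apply/forallP => j; rewrite !ffunE adt ?lt.
Qed.

Lemma dead_comp s : lpath s -> s != [::] -> deg (head d s) <= 1 ->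
  induces_path e [set w | connect e (head d s) w] &&
  (size s <= #|[set w | connect e (head d s) w]|).
Proof.
move=> ps sn dh.
have -> : size s <= #|[set w | connect e (head d s) w]|.
  have [us _] := ps; rewrite -(elimT card_uniqP us); apply: subset_leq_card.
  by apply/subsetP => x xs; rewrite inE; apply: lpath_conn.
rewrite andbT.
have [s0 [ps0 sn0 hd0 cl0]] : exists s0, [/\ lpath s0, s0 != [::],
    head d s0 = head d s & cl s0 (head d s0)].
  case clh: (cl s (head d s)); first by exists s.
  move/negbT: clh => /forallPn [u]; rewrite negb_imply => /andP[hu us].
  have hs := lpath_nth0 sn.
  have hneq : head d s != u by apply: contraNneq us => <-.
  exists [:: head d s; u]; split => //.
    split; first by rewrite /= inE hneq.
    case=> [|[|i]] [|[|j]] //= _ _; by rewrite ?eirr ?hu // esym.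
  apply/clP => w hw; have := deg1 dh hu hw => <-.
  by rewrite !inE eqxx orbT.
have [t [pt tn ht clh cll]] := walk ps0 sn0 cl0.
rewrite -hd0 -ht (comp_lpath pt tn clh cll); exact: ip_lpath.
Qed.

Definition LPt m (t : m.-tuple V) := uniq t &&
  [forall i : 'I_m, forall j : 'I_m,
     e (tnth t i) (tnth t j) == ((i.+1 == j :> nat) || (j.+1 == i :> nat))].

Lemma LPtP m (t : m.-tuple V) : reflect (lpath t) (LPt t).
Proof.
apply: (iffP andP) => [[ut /forallP H]|[ut H]]; split => //.
  move=> i j; rewrite size_tuple => Hi Hj.
  have := H (Ordinal Hi) => /forallP /(_ (Ordinal Hj)) /eqP.
  by rewrite !(tnth_nth d).
apply/forallP => i; apply/forallP => j; rewrite !(tnth_nth d) H ?size_tuple //.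
Qed.

Lemma lpath_uniq s1 s2 : lpath s1 -> lpath s2 -> size s1 = size s2 ->
  s1 != [::] -> head d s1 = head d s2 -> deg (head d s1) <= 1 -> s1 = s2.
Proof.
move=> [u1 a1] [u2 a2] sz sn hh dh.
apply: (eq_from_nth (x0 := d) sz).
suff H i : i < size s1 -> nth d s1 i = nth d s2 i /\
    (i.+1 < size s1 -> nth d s1 i.+1 = nth d s2 i.+1).
  by move=> i /H [].  
elim: i => [|i IH] Hi.
  split; first by rewrite !nth0.
  move=> H1; apply: (deg1 dh); first by rewrite -nth0 a1.
  by rewrite hh -nth0 a2 // -sz.
have [e0 e1] := IH (ltnW Hi); split; first exact: e1.
move=> H2.
have x1 : e (nth d s1 i.+1) (nth d s1 i) by rewrite a1 ?eqxx ?orbT // ltnW.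
have x2 : e (nth d s1 i.+1) (nth d s1 i.+2) by rewrite a1 ?eqxx.
have x3 : e (nth d s1 i.+1) (nth d s2 i.+2) by rewrite e1 // a2 -?sz ?eqxx.
have neq : nth d s1 i != nth d s1 i.+2.
  by rewrite nth_uniq // ?(ltn_trans _ H2) // ?(ltn_trans Hi) // eqn_leq ltnNge leqnSn andbF.
case/orP: (deg2 x1 x2 x3 neq) => /eqP h //.
have H2' : i.+2 < size s2 by rewrite -sz.
move: h; rewrite e0 => /eqP; rewrite nth_uniq // ?(ltnW (ltnW H2')) //.
by move/eqP; lia.
Qed.

Lemma lpath_rev s : lpath s -> lpath (rev s).
Proof.
move=> [us ads]; split; first by rewrite rev_uniq.
move=> i j; rewrite size_rev => Hi Hj; rewrite !nth_rev // ads; try lia.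
Qed.

Lemma lpath_take s n : lpath s -> lpath (take n s).
Proof.
move=> [us ads]; split; first exact: take_uniq.
have h1 : size (take n s) <= n by rewrite size_take; case: ifP => //; lia.
have h2 : size (take n s) <= size s by rewrite size_take; case: ifP => //; lia.
move=> i j Hi Hj; rewrite !nth_take; try lia.
by rewrite ads //; lia.
Qed.

Lemma deg_head s : lpath s -> s != [::] ->
  (forall x y, x \in s -> e x y -> y \in s) -> deg (head d s) = (1 < size s).
Proof.
move=> [us ads] sn clo.
have n0 : 0 < size s by case: (s) sn.
case: ltnP => h.
  rewrite /= /deg -(cards1 (nth d s 1)); apply: eq_card => w.
  rewrite !inE; apply/idP/eqP => [hw|->]; last by rewrite -nth0 ads.
  have ws : w \in s by apply: (clo (head d s)) => //; apply: lpath_nth0.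
  move: hw; rewrite -(nth_index d ws) -nth0 ads ?index_mem //.
  by case/orP => /eqP // <-.
rewrite /= /deg; apply/eqP; rewrite cards_eq0; apply/eqP/setP => w; rewrite !inE.
apply/negP => hw.
have ws : w \in s by apply: (clo (head d s)) => //; apply: lpath_nth0.
move: hw; rewrite -(nth_index d ws) -nth0 ads ?index_mem //.
have : index w s < size s by rewrite index_mem.
move: h; case: (index w s) => [|[|k]] //=; lia.
Qed.

End Struct.

Section Struct2.
Variables (V : finType) (e : rel V).
Hypotheses (esym : symmetric e) (eirr : irreflexive e)
  (edeg : forall v, #|[set w | e v w]| <= 2).

Definition comp (x : V) := [set w | connect e x w].

Lemma compC C x : is_component e C -> x \in C -> comp x = C.
Proof.
move=> /existsP [v /eqP ->]; rewrite inE => vx.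
apply/setP => w; rewrite !inE.
by rewrite (same_connect (sym_connect_sym esym) vx).
Qed.

Lemma comp_closed C x y : is_component e C -> x \in C -> e x y -> y \in C.
Proof.
move=> /existsP [v /eqP ->]; rewrite !inE => vx xy.
exact: connect_trans vx (connect1 xy).
Qed.

Lemma thead_head m (t : m.+1.-tuple V) d : thead t = head d t.
Proof. by rewrite /thead (tnth_nth d). Qed.

Lemma comp_sum_false m C : is_component e C ->
  ~~ (induces_path e C && (m.+1 <= #|C|)) ->
  \sum_(t : m.+1.-tuple V | LPt e t && (comp (thead t) == C)) (2 - deg e (thead t)) = 0.
Proof.
move=> cC nb; apply: big1 => t /andP[lt /eqP ctC].
case: (leqP (deg e (thead t)) 1) => dh; last by apply/eqP; rewrite subn_eq0.
have pt := elimT (LPtP e (thead t) t) lt.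
have tn : (t : seq V) != [::] by case: t {lt ctC dh pt} => [[]].
have := dead_comp esym eirr edeg pt tn.
rewrite -thead_head dh size_tuple -/(comp _) ctC => /(_ isT) H.
by rewrite H in nb.
Qed.

Lemma comp_sum_true m C : is_component e C -> induces_path e C -> m.+1 <= #|C| ->
  \sum_(t : m.+1.-tuple V | LPt e t && (comp (thead t) == C)) (2 - deg e (thead t)) = 2.
Proof.
move=> cC ipC mC.
have [g /and3P[/injectiveP ginj /eqP gC /forallP gadj]] := existsP ipC.
have L0 : 0 < #|C| by apply: leq_trans mC.
pose d := g (Ordinal L0).
pose sg := map g (enum 'I_#|C|).
have szsg : size sg = #|C| by rewrite size_map size_enum_ord.
have nthsg i (Hi : i < #|C|) : nth d sg i = g (Ordinal Hi).
  rewrite (nth_map (Ordinal Hi)) ?size_enum_ord //; apply: f_equal; apply: val_inj => /=.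
  by rewrite nth_enum_ord.
have memsg x : (x \in sg) = (x \in C).
  rewrite -gC; apply/mapP/imsetP => [[i _ ->]|[i _ ->]]; exists i => //.
  by rewrite mem_enum.
have psg : lpath e d sg.
  split; first by rewrite map_inj_uniq ?enum_uniq.
  move=> i j; rewrite szsg => Hi Hj; rewrite !nthsg.
  by have := gadj (Ordinal Hi) => /forallP /(_ (Ordinal Hj)) /eqP.
have sgn : sg != [::] by rewrite -size_eq0 szsg -lt0n.
have clo x y : x \in sg -> e x y -> y \in sg.
  by rewrite !memsg; apply: comp_closed.
have psr := lpath_rev psg.
have srn : rev sg != [::] by rewrite -size_eq0 size_rev szsg -lt0n.
have clor x y : x \in rev sg -> e x y -> y \in rev sg.
  by rewrite !mem_rev; apply: clo.
have dh0 : deg e (head d sg) = (1 < #|C|).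
  by rewrite (deg_head psg sgn clo) szsg.
have dh1 : deg e (head d (rev sg)) = (1 < #|C|).
  by rewrite (deg_head psr srn clor) size_rev szsg.
have sz0 : size (take m.+1 sg) == m.+1 by rewrite size_takel ?szsg.
have sz1 : size (take m.+1 (rev sg)) == m.+1 by rewrite size_takel ?size_rev ?szsg.
pose T0 : m.+1.-tuple V := Tuple sz0.
pose T1 : m.+1.-tuple V := Tuple sz1.
have hT0 : thead T0 = head d sg by rewrite (thead_head T0 d) /= -!nth0 nth_take.
have hT1 : thead T1 = head d (rev sg) by rewrite (thead_head T1 d) /= -!nth0 nth_take.
have PT0 : LPt e T0 && (comp (thead T0) == C).
  apply/andP; split; first by apply/(LPtP e d); apply: lpath_take.
  by rewrite hT0 (compC cC) // -memsg lpath_nth0.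
have PT1 : LPt e T1 && (comp (thead T1) == C).
  apply/andP; split; first by apply/(LPtP e d); apply: lpath_take.
  by rewrite hT1 (compC cC) // -memsg -mem_rev lpath_nth0.
have key t : LPt e t -> comp (thead t) == C -> deg e (thead t) <= 1 ->
    (t == T0) || (t == T1).
  move=> lt /eqP ctC dh.
  have pt := elimT (LPtP e d t) lt.
  have tn : (t : seq V) != [::] by case: t {lt ctC dh pt} => [[]].
  have hC : thead t \in sg by rewrite memsg -ctC inE connect0.
  have jlt : index (thead t) sg < size sg by rewrite index_mem.
  have nj : nth d sg (index (thead t) sg) = thead t by rewrite nth_index.
  have szt : size t = m.+1 by rewrite size_tuple.
  case: (posnP (index (thead t) sg)) => [j0|jp].
    apply/orP; left; apply/eqP/val_inj => /=.
    apply: (lpath_uniq edeg pt (lpath_take _ psg)) => //.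
    - by rewrite szt size_takel ?szsg.
    - by rewrite -thead_head -nth0 nth_take // -j0 nj.
    - by rewrite -thead_head.
  case: (eqVneq (index (thead t) sg).+1 (size sg)) => [jl|jl].
    apply/orP; right; apply/eqP/val_inj => /=.
    apply: (lpath_uniq edeg pt (lpath_take _ psr)) => //.
    - by rewrite szt size_takel ?size_rev ?szsg.
    - rewrite -thead_head -nth0 nth_take // nth_rev -?lt0n //.
      by rewrite -jl subn1 /= nj.
      by rewrite szsg.
    - by rewrite -thead_head.
  exfalso; move: dh; rewrite leqNgt => /negP; apply.
  have [us ads] := psg.
  have jlt' : (index (thead t) sg).+1 < size sg by rewrite ltn_neqAle jl jlt.
  apply: (@deg_ge2 _ _ _ (nth d sg (index (thead t) sg).-1)
                             (nth d sg (index (thead t) sg).+1)).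
  - have jm : (index (thead t) sg).-1 < size sg by apply: leq_ltn_trans (leq_pred _) jlt.
    by rewrite -{1}nj ads // prednK ?eqxx ?orbT.
  - by rewrite -{1}nj ads ?eqxx.
  - have jm : (index (thead t) sg).-1 < size sg by apply: leq_ltn_trans (leq_pred _) jlt.
    rewrite nth_uniq //; apply/negP => /eqP h.
    by move: (leq_pred (index (thead t) sg)); rewrite h ltnn.
rewrite (bigID (fun t => t \in [set T0; T1])) /=.
rewrite [X in _ + X]big1 ?addn0; last first.
  move=> t /andP[/andP[lt ct] nin].
  case: (leqP (deg e (thead t)) 1) => dh; last by apply/eqP; rewrite subn_eq0.
  by move: nin; rewrite !inE key.
rewrite (eq_bigl (fun t => t \in [set T0; T1])); last first.
  move=> t; rewrite andbC; case: (boolP (t \in _)) => //=.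
  by rewrite !inE => /orP[] /eqP ->.
case: (ltnP 1 #|C|) => hL.
  have neq : T0 != T1.
    apply/negP => /eqP h; have := congr1 (fun t => thead t) h.
    have s2 : 1 < size sg by rewrite szsg.
    rewrite hT0 hT1 -!nth0 nth_rev ?(ltnW s2) // => /eqP.
    rewrite nth_uniq ?(ltnW s2) ?subn1 ?ltn_predL ?(ltnW s2) //; last by case: psg.
    by rewrite eq_sym -subn1 subn_eq0 leqNgt s2.
  rewrite big_setU1 ?big_set1 /=; last by rewrite inE.
  by rewrite hT0 hT1 dh0 dh1 hL.
have L1 : #|C| = 1 by apply/eqP; rewrite eqn_leq hL L0.
have eT : T0 = T1.
  apply: val_inj => /=.
  have m0 : m = 0 by move: mC; rewrite L1; case: (m).
  rewrite m0; move: szsg; rewrite L1.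
  by case: (sg) => [|x [|]] //.
rewrite eT setUid big_set1 -eT hT0 dh0 L1 //.
Qed.

Lemma struct_sum m :
  \sum_(t : m.+1.-tuple V | LPt e t) (2 - deg e (thead t)) =
  2 * num_path_comps_ge e m.+1.
Proof.
rewrite (partition_big (fun t => comp (thead t)) (is_component e)) /=; last first.
  by move=> t _; apply/existsP; exists (thead t).
rewrite /num_path_comps_ge -sum1dep_card big_distrr /=.
rewrite [RHS]big_mkcond [LHS]big_mkcond; apply: eq_bigr => C _.
case cC: (is_component e C) => //=.
case: (boolP (induces_path e C && (m.+1 <= #|C|))) => h.
  by move/andP: h => [h1 h2]; rewrite comp_sum_true.
exact: comp_sum_false.
Qed.

End Struct2.


Lemma sum_const_card (T : finType) (P : pred T) c :
  \sum_(x | P x) c = #|[set x | P x]| * c.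
Proof. by rewrite -sum1dep_card big_distrl /=; apply: eq_bigr => x _; rewrite mul1n. Qed.

Definition restr m (F : {ffun 'I_m.+1 -> {ffun 'I_m.+1 -> bool}}) :
  {ffun 'I_m -> {ffun 'I_m -> bool}} :=
  [ffun i => [ffun j => F (lift ord0 i) (lift ord0 j)]].

Definition LPb m (F : {ffun 'I_m -> {ffun 'I_m -> bool}}) :=
  [forall i, forall j, F i j == ((i.+1 == j :> nat) || (j.+1 == i :> nat))].

Section Count2.
Variables (V : finType) (e : rel V).

Lemma Wt_sum k (phi : {ffun 'I_k -> {ffun 'I_k -> bool}} -> nat) :
  \sum_(t : k.-tuple V | uniq t) phi (pb e t) = \sum_F Emb e F * phi F.
Proof.
rewrite (partition_big (@pb _ e k) xpredT) //=; apply: eq_bigr => F _.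
rewrite (eq_bigr (fun _ => phi F)); last by move=> t /andP[_ /eqP ->].
by rewrite sum_const_card.
Qed.

Lemma ext_sum m (psi : m.+1.-tuple V -> nat) :
  \sum_(t : m.+1.-tuple V | uniq t) psi t =
  \sum_(t : m.-tuple V | uniq t) \sum_(v | v \notin t) psi [tuple of v :: t].
Proof.
pose h (p : m.-tuple V * V) : m.+1.-tuple V := [tuple of p.2 :: p.1].
have hb : bijective h.
  exists (fun t : m.+1.-tuple V => ([tuple of behead t], thead t)).
    by move=> [t v]; congr pair; apply: val_inj.
  by move=> t; case/tupleP: t => x t; apply: val_inj.
rewrite (reindex h) /=; last by apply: onW_bij.
rewrite (eq_bigr (fun t : m.-tuple V => \sum_v (if v \notin t then psi [tuple of v :: t] else 0)));
  last by move=> t _; rewrite big_mkcond.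
rewrite pair_big /= big_mkcond [RHS]big_mkcond; apply: eq_bigr => [[t v]] _ /=.
by rewrite andbT; case: (v \in t); case: (uniq t).
Qed.

Lemma card_notin m (t : m.-tuple V) : uniq t -> #|[set v | v \notin t]| = #|V| - m.
Proof.
move=> ut.
have ct : #|[set x in t]| = m.
  by rewrite cardsE; move/card_uniqP: ut => ->; rewrite size_tuple.
rewrite -(cardsC [set x in t]) ct addKn.
by apply: eq_card => v; rewrite !inE.
Qed.

Lemma restr_cons m (t : m.-tuple V) v : restr (pb e [tuple of v :: t]) = pb e t.
Proof. by apply/ffunP => i; apply/ffunP => j; rewrite !ffunE !tnthS. Qed.

Lemma lift_sum m (phi : {ffun 'I_m -> {ffun 'I_m -> bool}} -> nat) :
  (#|V| - m) * \sum_(t : m.-tuple V | uniq t) phi (pb e t) =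
  \sum_(t : m.+1.-tuple V | uniq t) phi (restr (pb e t)).
Proof.
rewrite ext_sum big_distrr; apply: eq_bigr => t ut /=.
rewrite (eq_bigr (fun _ => phi (pb e t))); last by move=> v _; rewrite restr_cons.
by rewrite sum_const_card card_notin.
Qed.

Lemma out_sum m :
  \sum_(t : m.+2.-tuple V | uniq t)
     (LPb (restr (pb e t)) && pb e t ord0 (lift ord0 ord0)) =
  \sum_(t : m.+1.-tuple V | uniq t)
     LPb (pb e t) * #|[set v | (v \notin t) && e v (thead t)]|.
Proof.
rewrite ext_sum; apply: eq_bigr => t ut.
rewrite (eq_bigr (fun v => nat_of_bool (LPb (pb e t) && e v (thead t)))); last first.
  by move=> v _; rewrite restr_cons !ffunE tnth0 tnthS.
case: (LPb (pb e t)) => /=; last by rewrite mul0n big1.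
by rewrite mul1n -sum1dep_card big_mkcondr.
Qed.

Lemma deg_split m (t : m.+1.-tuple V) : symmetric e -> uniq t ->
  deg e (thead t) = #|[set i | pb e t ord0 i]| +
                    #|[set v | (v \notin t) && e v (thead t)]|.
Proof.
move=> esym ut; rewrite /deg -(cardsID [set x in t]); congr (_ + _).
  have tinj := elimT (tuple_uniqP t) ut.
  rewrite -(card_imset _ tinj); apply: eq_card => w; rewrite !inE.
  apply/andP/imsetP => [[hw /tnthP [i wi]]|[i]]; last first.
    by rewrite inE /pb !ffunE => hi ->; split; [exact: hi | exact: mem_tnth].
  by exists i => //; rewrite inE /pb !ffunE -wi.
by apply: eq_card => w; rewrite !inE esym.
Qed.

End Count2.

Lemma ffact_inj a b j : j < a -> a ^_ j.+1 = b ^_ j.+1 -> a = b.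
Proof.
have mono n : j <= n -> n ^_ j.+1 < n.+1 ^_ j.+1.
  move=> jn; rewrite [n ^_ _]ffactnSr [n.+1 ^_ _]ffactnS /= [n ^_ j * _]mulnC ltn_pmul2r ?ffact_gt0 //.
  by rewrite ltnS leq_subr.
have strict x y : j <= x -> x < y -> x ^_ j.+1 < y ^_ j.+1.
  move=> jx; elim: y => // y IH; rewrite ltnS leq_eqVlt => /orP[/eqP <-|xy].
    exact: mono.
  apply: ltn_trans (IH xy) (mono _ _).
  by apply: leq_trans jx (ltnW xy).
move=> ja eq; case: (ltngtP a b) => // h.
  by have := strict _ _ (ltnW ja) h; rewrite eq ltnn.
case: (leqP j b) => jb.
  by have := strict _ _ jb h; rewrite eq ltnn.
by move: eq; rewrite (@ffact_small b) ?ltnS ?(ltnW jb) // => H; have := ffact_gt0 a j.+1; rewrite H ltnn ja.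
Qed.


Lemma Wt_eq k (V1 V2 : finType) (e1 : rel V1) (e2 : rel V2)
  (phi : {ffun 'I_k -> {ffun 'I_k -> bool}} -> nat) :
  simple_graph e1 -> simple_graph e2 -> same_deck k e1 e2 ->
  \sum_(t : k.-tuple V1 | uniq t) phi (pb e1 t) =
  \sum_(t : k.-tuple V2 | uniq t) phi (pb e2 t).
Proof.
move=> s1 s2 sd; rewrite !Wt_sum; apply: eq_bigr => F _; congr (_ * _).
have H : simple_graph (fun i j => F i j) -> Emb e1 F = Emb e2 F.
  by move=> sF; rewrite !Emb_deck sd.
case: (posnP (Emb e1 F)) => [E1|E1]; last exact/H/(Emb_simple s1).
case: (posnP (Emb e2 F)) => [E2|E2]; first by rewrite E1 E2.
exact/H/(Emb_simple s2).
Qed.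

Lemma uniq_count (V : finType) k : \sum_(t : k.-tuple V | uniq t) 1 = #|V| ^_ k.
Proof.
rewrite sum1dep_card -(@card_uniq_tuples V k predT).
by apply: eq_card => t; rewrite !inE all_predT.
Qed.

Definition phiA k (F : {ffun 'I_k.+2 -> {ffun 'I_k.+2 -> bool}}) : nat :=
  LPb (restr F).
Definition phiY k (F : {ffun 'I_k.+2 -> {ffun 'I_k.+2 -> bool}}) : nat :=
  LPb (restr F) * #|[set i | restr F ord0 i]|.
Definition phiX k (F : {ffun 'I_k.+2 -> {ffun 'I_k.+2 -> bool}}) : nat :=
  LPb (restr F) && F ord0 (lift ord0 ord0).

Lemma LPt_pb (V : finType) (e : rel V) m (t : m.-tuple V) :
  LPt e t = uniq t && LPb (pb e t).
Proof.
rewrite /LPt /LPb; congr andb; apply: eq_forallb => i; apply: eq_forallb => j.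
by rewrite !ffunE.
Qed.

Lemma key_eq (V : finType) (e : rel V) p :
  symmetric e -> irreflexive e -> max_deg_le e 2 ->
  (#|V| - p.+1) * (2 * num_path_comps_ge e p.+1)
  + \sum_(t : p.+2.-tuple V | uniq t) phiY (pb e t)
  + (#|V| - p.+1) * \sum_(t : p.+2.-tuple V | uniq t) phiX (pb e t)
  = 2 * \sum_(t : p.+2.-tuple V | uniq t) phiA (pb e t).
Proof.
move=> esym eirr edeg.
have EA := @lift_sum V e p.+1 (fun F => nat_of_bool (LPb F)).
have EY := @lift_sum V e p.+1 (fun F => LPb F * #|[set i | F ord0 i]|).
have EX := out_sum e p.
rewrite /phiA /phiY /phiX -EA -EY EX /=.
rewrite -!mulnDr [RHS]mulnCA; congr (_ * _).
rewrite -(struct_sum esym eirr edeg).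
have ES : \sum_(t : p.+1.-tuple V | LPt e t) (2 - deg e (thead t)) =
    \sum_(t : p.+1.-tuple V | uniq t) (LPb (pb e t) * (2 - deg e (thead t))).
  rewrite big_mkcond [RHS]big_mkcond; apply: eq_bigr => t _.
  by rewrite LPt_pb; case: (uniq t); case: (LPb (pb e t)); rewrite ?mul0n ?mul1n.
rewrite ES big_distrr -!big_split /=; apply: eq_bigr => t ut.
case: (LPb (pb e t)) => //=; rewrite !mul1n.
rewrite -addnA -(deg_split esym ut) subnK //; exact: edeg.
Qed.

Theorem lemma4p3 (k : nat) (V1 V2 : finType) (e1 : rel V1) (e2 : rel V2) :
  2 <= k -> k <= #|V1| ->
  simple_graph e1 -> simple_graph e2 ->
  max_deg_le e1 2 -> max_deg_le e2 2 ->
  same_deck k e1 e2 ->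
  num_path_comps_ge e1 k.-1 = num_path_comps_ge e2 k.-1.
Proof.
move=> k2 kn s1 s2 d1 d2 sd.
case: k k2 kn sd => [|[|p]] // _ kn sd /=.
have [sy1 ir1] := s1; have [sy2 ir2] := s2.
have hn : #|V1| = #|V2|.
  apply: (@ffact_inj _ _ p.+1 kn).
  by rewrite -!uniq_count (Wt_eq (fun _ => 1) s1 s2 sd).
have K1 := key_eq p sy1 ir1 d1; have K2 := key_eq p sy2 ir2 d2.
rewrite (Wt_eq (@phiY _) s1 s2 sd) (Wt_eq (@phiX _) s1 s2 sd)
        (Wt_eq (@phiA _) s1 s2 sd) hn -K2 in K1.
move/eqP: K1; rewrite !eqn_add2r eqn_mul2l => /orP[|].
  by rewrite subn_eq0 -hn leqNgt kn.
by rewrite eqn_mul2l /= => /eqP.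
Qed.
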